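(* Let $(G,u)$ be a unital po-group and $m:G\to\mathbb R$ a group homomorphism (signed measure on $G$). Then $m$ is relatively bounded if and only if $m$ is bounded on the interval $[0,nu]=\{g\in G:0\le g\le nu\}$ for every integer $n\ge1$. If, in addition, $G$ satisfies (RDP), then $m$ is relatively bounded if and only if $m$ is bounded on $[0,u]$.
   Context: A po-group is a (not necessarily Abelian) group $G$ with a partial order $\le$ such that $a\le b$ implies $x+a+y\le x+b+y$ for all $x,y$; $G^+$ is its positive cone. An element $u\in G^+$ is a strong unit if for every $g\in G$ there is $n\ge1$ with $g\le nu$; $(G,u)$ is then a unital po-group. A map $m:G\to\mathbb R$ is relatively bounded if for every subset $W\subseteq G$ bounded above and below in $G$, the set $m(W)$ is bounded in $\mathbb R$. $G$ satisfies (RDP) if for all $a_1,a_2,b_1,b_2\in G^+$ with $a_1+a_2=b_1+b_2$ there exist $d_1,d_2,d_3,d_4\in G^+$ with $d_1+d_2=a_1$, $d_3+d_4=a_2$, $d_1+d_3=b_1$, $d_2+d_4=b_2$. *)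

(* Defs.v *)
From Stdlib Require Import Reals.
Open Scope R_scope.

Record POGroup := {
  carrier :> Type;
  gadd : carrier -> carrier -> carrier;
  gzero : carrier;
  gopp : carrier -> carrier;
  gle : carrier -> carrier -> Prop;
  gaddA : forall x y z, gadd x (gadd y z) = gadd (gadd x y) z;
  gadd0l : forall x, gadd gzero x = x;
  gadd0r : forall x, gadd x gzero = x;
  gaddNl : forall x, gadd (gopp x) x = gzero;
  gaddNr : forall x, gadd x (gopp x) = gzero;
  gle_refl : forall x, gle x x;
  gle_antisym : forall x y, gle x y -> gle y x -> x = y;
  gle_trans : forall x y z, gle x y -> gle y z -> gle x z;
  gle_add : forall a b x y, gle a b -> gle (gadd x (gadd a y)) (gadd x (gadd b y))
}.

Arguments gadd {p}.
Arguments gzero {p}.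
Arguments gopp {p}.
Arguments gle {p}.

Fixpoint gnmul {G : POGroup} (n : nat) (u : G) : G :=
  match n with
  | O => gzero
  | S k => gadd u (gnmul k u)
  end.

Definition positive_cone {G : POGroup} (g : G) : Prop := gle gzero g.

Definition strong_unit {G : POGroup} (u : G) : Prop :=
  positive_cone u /\ forall g : G, exists n : nat, (1 <= n)%nat /\ gle g (gnmul n u).

Definition group_hom {G : POGroup} (m : G -> R) : Prop :=
  forall x y : G, m (gadd x y) = m x + m y.

Definition order_bounded {G : POGroup} (W : G -> Prop) : Prop :=
  exists a b : G, forall w, W w -> gle a w /\ gle w b.

Definition bounded_on {G : POGroup} (m : G -> R) (W : G -> Prop) : Prop :=
  exists M : R, forall w, W w -> Rabs (m w) <= M.

Definition relatively_bounded {G : POGroup} (m : G -> R) : Prop :=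
  forall W : G -> Prop, order_bounded W -> bounded_on m W.

Definition interval {G : POGroup} (a b : G) : G -> Prop :=
  fun g => gle a g /\ gle g b.

Definition RDP (G : POGroup) : Prop :=
  forall a1 a2 b1 b2 : G,
    positive_cone a1 -> positive_cone a2 -> positive_cone b1 -> positive_cone b2 ->
    gadd a1 a2 = gadd b1 b2 ->
    exists d1 d2 d3 d4 : G,
      positive_cone d1 /\ positive_cone d2 /\ positive_cone d3 /\ positive_cone d4 /\
      gadd d1 d2 = a1 /\ gadd d3 d4 = a2 /\ gadd d1 d3 = b1 /\ gadd d2 d4 = b2.

(* Main.v *)
Require Import Defs.
From Stdlib Require Import Reals Lra.
Open Scope R_scope.

Lemma le_addl (G : POGroup) (a b x : G) : gle a b -> gle (gadd x a) (gadd x b).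
Proof.
  intro H. pose proof (gle_add G a b x gzero H) as H1.
  rewrite !gadd0r in H1. exact H1.
Qed.

Lemma hom0 (G : POGroup) (m : G -> R) : group_hom m -> m gzero = 0.
Proof.
  intro Hm. pose proof (Hm gzero gzero) as H. rewrite gadd0l in H. lra.
Qed.

Lemma part1 (G : POGroup) (u : G) (m : G -> R) :
  strong_unit u -> group_hom m ->
  (relatively_bounded m <->
     (forall n : nat, (1 <= n)%nat -> bounded_on m (interval gzero (gnmul n u)))).
Proof.
  intros [Hu Hsu] Hm. split.
  - intros Hr n _. apply Hr. exists gzero, (gnmul n u). intros w Hw; exact Hw.
  - intros Hb W [a [b Hab]].
    destruct (Hsu (gadd (gopp a) b)) as [n [Hn Hle]].
    destruct (Hb n Hn) as [M HM].
    exists (M + Rabs (m (gopp a))). intros w Hw.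
    destruct (Hab w Hw) as [H1 H2].
    assert (Hi : interval gzero (gnmul n u) (gadd (gopp a) w)).
    { split.
      - pose proof (le_addl G a w (gopp a) H1) as H. rewrite gaddNl in H. exact H.
      - eapply gle_trans; [apply le_addl; exact H2| exact Hle]. }
    pose proof (HM _ Hi) as H. rewrite Hm in H.
    pose proof (Rabs_triang (m (gopp a) + m w) (- m (gopp a))) as T.
    replace (m (gopp a) + m w + - m (gopp a)) with (m w) in T by ring.
    rewrite Rabs_Ropp in T. lra.
Qed.

Theorem lemma3p2 (G : POGroup) (u : G) (m : G -> R) :
  strong_unit u -> group_hom m ->
  (relatively_bounded m <->
     (forall n : nat, (1 <= n)%nat -> bounded_on m (interval gzero (gnmul n u))))
  /\
  (RDP G -> (relatively_bounded m <-> bounded_on m (interval gzero u))).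
Proof.
  intros Hsu Hm. pose proof (part1 G u m Hsu Hm) as P1. split; [exact P1|].
  intro Hrdp. rewrite P1. split.
  - intro H. pose proof (H 1%nat (le_n _)) as [M HM]. exists M.
    intros w Hw. apply HM. simpl. rewrite gadd0r. exact Hw.
  - intros [M HM] n _. clear P1.
    induction n as [|n [Mn HMn]].
    + exists (Rabs (m gzero)). intros w [H1 H2]. simpl in H2.
      rewrite (gle_antisym G w gzero H2 H1). lra.
    + exists (M + Mn). intros g [H1 H2]. simpl in H2.
      set (S := gadd u (gnmul n u)) in *.
      assert (Hh : positive_cone (gadd (gopp g) S)).
      { pose proof (le_addl G g S (gopp g) H2) as H. rewrite gaddNl in H. exact H. }
      assert (Heq : gadd g (gadd (gopp g) S) = gadd u (gnmul n u)).
      { rewrite gaddA, gaddNr, gadd0l. reflexivity. }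
      assert (Hn0 : positive_cone (gnmul n u)).
      { clear - Hsu. induction n; simpl. apply gle_refl.
        destruct Hsu as [Hu _].
        eapply gle_trans; [exact IHn|].
        pose proof (gle_add G gzero u gzero (gnmul n u) Hu) as H.
        rewrite !gadd0l in H. exact H. }
      destruct (Hrdp g _ u _ H1 Hh (proj1 Hsu) Hn0 Heq)
        as [d1 [d2 [d3 [d4 [P1 [P2 [P3 [P4 [E1 [E2 [E3 E4]]]]]]]]]]].
      assert (A1 : interval gzero u d1).
      { split; [exact P1|]. rewrite <- E3.
        pose proof (le_addl G gzero d3 d1 P3) as H. rewrite gadd0r in H. exact H. }
      assert (A2 : interval gzero (gnmul n u) d2).
      { split; [exact P2|]. rewrite <- E4.
        pose proof (le_addl G gzero d4 d2 P4) as H. rewrite gadd0r in H. exact H. }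
      pose proof (HM _ A1). pose proof (HMn _ A2).
      rewrite <- E1, Hm.
      pose proof (Rabs_triang (m d1) (m d2)). lra.
Qed.
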